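(* Let $A$ be a Hopf $R$-algebroid. The following statements are equivalent: (i) $S(\mathrm{Prim}(A))=\mathrm{Prim}(A)$; (ii) $S(\mathrm{Prim}(A))\subseteq\mathrm{Prim}(A)$; (iii) $S(X)=-X$ for every $X\in\mathrm{Prim}(A)$.
   Context: Let $k$ be a field and $R$ a commutative, associative, not necessarily unital $k$-algebra. A Hopf $R$-algebroid is a $k$-algebra $A$ together with the following data: - $R$ is a commutative (not necessarily central) subalgebra of $A$, and $A$ has local units in $R$ (for finitely many elements of $A$ there is $\eta\in R$ with $\eta a=a\eta=a$ for each of them); - a left $R$-coalgebra structure on $A$, with comultiplication $\Delta\colon A\to A\otimes^{ll}_R A$ (tensor product of left $R$-modules) and counit $\epsilon\colon A\to R$; - a $k$-linear involution $S\colon A\to A$ (the antipode). These satisfy: (i) $\epsilon|_R=\mathrm{id}$, and $\Delta|_R$ is the canonical embedding $R\subset A\otimes^{ll}_RA$; (ii) $\Delta(A)$ lies in the algebra of elements of $A\otimes^{ll}_RA$ on which the two right $R$-actions coincide; (iii) $\epsilon(ab)=\epsilon(a\epsilon(b))$ and $\Delta(ab)=\Delta(a)\Delta(b)$; (iv) $S|_R=\mathrm{id}$ and $S(ab)=S(b)S(a)$; (v) $\mu_A\circ(S\otimes\mathrm{id})\circ\Delta=\epsilon\circ S$, where $\mu_A\colon A\otimes_R^{rl}A\to A$ is the multiplication. An element $a\in A$ is primitive if $\Delta(a)=\eta\otimes a+a\otimes\eta$ for some $\eta\in A$ with $\eta a=a\eta=a$. The left $R$-module of primitive elements is denoted $\mathrm{Prim}(A)$.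 *)

(* Defs.v *)
From HB Require Import structures.
From mathcomp Require Import all_boot all_algebra.
Set Implicit Arguments. Unset Strict Implicit. Unset Printing Implicit Defensive.
Import GRing.Theory.
Local Open Scope ring_scope.

(* Hopf R-algebroids over a field k, with R a commutative, not necessarily
   unital subalgebra of a not necessarily unital k-algebra A.
   Tensor products over R are given by their universal property. *)

Definition lin (k : fieldType) (U V : lmodType k) (f : U -> V) : Prop :=
  forall (c : k) (u v : U), f (c *: u + v) = c *: f u + f v.

Section Defs.
Variables (k : fieldType) (A : lmodType k) (mul : A -> A -> A) (R : {pred A}).

Definition bilin (W : lmodType k) (f : A -> A -> W) : Prop :=
  (forall a, lin (f a)) /\ (forall b, lin (fun a => f a b)).

Definition trilin (W : lmodType k) (f : A -> A -> A -> W) : Prop :=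
  (forall a b, lin (f a b)) /\ (forall a c, lin (fun b => f a b c))
  /\ (forall b c, lin (fun a => f a b c)).

Definition balanced (W : lmodType k) (f : A -> A -> W) : Prop :=
  forall r a b, r \in R -> f (mul r a) b = f a (mul r b).

Definition balanced3 (W : lmodType k) (f : A -> A -> A -> W) : Prop :=
  forall r a b c, r \in R ->
    f (mul r a) b c = f a (mul r b) c /\ f a (mul r b) c = f a b (mul r c).

(* T with tens is the tensor product A (x)^{ll}_R A of left R-modules *)
Definition is_tensor2 (T : lmodType k) (tens : A -> A -> T) : Prop :=
  [/\ bilin tens, balanced tens,
      (forall (W : lmodType k) (f : A -> A -> W), bilin f -> balanced f ->
         exists g : T -> W, lin g /\ forall a b, g (tens a b) = f a b)
    & (forall (W : lmodType k) (g h : T -> W), lin g -> lin h ->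
         (forall a b, g (tens a b) = h (tens a b)) -> forall t, g t = h t)].

Definition is_tensor3 (T3 : lmodType k) (tens3 : A -> A -> A -> T3) : Prop :=
  [/\ trilin tens3, balanced3 tens3,
      (forall (W : lmodType k) (f : A -> A -> A -> W), trilin f -> balanced3 f ->
         exists g : T3 -> W, lin g /\ forall a b c, g (tens3 a b c) = f a b c)
    & (forall (W : lmodType k) (g h : T3 -> W), lin g -> lin h ->
         (forall a b c, g (tens3 a b c) = h (tens3 a b c)) -> forall t, g t = h t)].

Record hopf_algebroid (T : lmodType k) (tens : A -> A -> T)
    (T3 : lmodType k) (tens3 : A -> A -> A -> T3)
    (Delta : A -> T) (eps : A -> A) (S : A -> A) : Prop := {
  ha_mul_bilin : bilin mul;
  ha_mul_assoc : associative mul;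
  ha_R0 : 0 \in R;
  ha_R_sub : forall (c : k) r s, r \in R -> s \in R -> c *: r + s \in R;
  ha_R_mul : forall r s, r \in R -> s \in R -> mul r s \in R;
  ha_R_comm : forall r s, r \in R -> s \in R -> mul r s = mul s r;
  ha_local_units : forall s : seq A, exists2 eta, eta \in R &
      forall a, a \in s -> mul eta a = a /\ mul a eta = a;
  ha_tensor2 : is_tensor2 tens;
  ha_tensor3 : is_tensor3 tens3;
  ha_Delta_lin : lin Delta;
  ha_eps_lin : lin eps;
  ha_eps_R : forall a, eps a \in R;
  ha_Delta_Rlin : forall r (lr : T -> T), r \in R -> lin lr ->
      (forall x y, lr (tens x y) = tens (mul r x) y) ->
      forall a, Delta (mul r a) = lr (Delta a);
  ha_eps_Rlin : forall r a, r \in R -> eps (mul r a) = mul r (eps a);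
  ha_coassoc : forall (L : A -> T -> T3) (Rr : A -> T -> T3) (D1 D2 : T -> T3),
      (forall c, lin (L c) /\ forall x y, L c (tens x y) = tens3 x y c) ->
      (forall a, lin (Rr a) /\ forall y z, Rr a (tens y z) = tens3 a y z) ->
      lin D1 -> (forall a b, D1 (tens a b) = L b (Delta a)) ->
      lin D2 -> (forall a b, D2 (tens a b) = Rr a (Delta b)) ->
      forall a, D1 (Delta a) = D2 (Delta a);
  ha_counit_l : forall g : T -> A, lin g ->
      (forall x y, g (tens x y) = mul (eps x) y) -> forall a, g (Delta a) = a;
  ha_counit_r : forall g : T -> A, lin g ->
      (forall x y, g (tens x y) = mul (eps y) x) -> forall a, g (Delta a) = a;
  ha_eps_on_R : forall r, r \in R -> eps r = r;
  ha_Delta_on_R : forall r eta, r \in R -> eta \in R -> mul eta r = r ->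
      Delta r = tens r eta;
  (* (ii) Delta lands in the Takeuchi product *)
  ha_takeuchi : forall r (rho1 rho2 : T -> T), r \in R -> lin rho1 -> lin rho2 ->
      (forall x y, rho1 (tens x y) = tens (mul x r) y) ->
      (forall x y, rho2 (tens x y) = tens x (mul y r)) ->
      forall a, rho1 (Delta a) = rho2 (Delta a);
  ha_eps_mul : forall a b, eps (mul a b) = eps (mul a (eps b));
  ha_Delta_mul : forall (Rm : A -> A -> T -> T),
      (forall c d, lin (Rm c d) /\
         forall x y, Rm c d (tens x y) = tens (mul x c) (mul y d)) ->
      forall a b (M : T -> T), lin M ->
      (forall c d, M (tens c d) = Rm c d (Delta a)) ->
      Delta (mul a b) = M (Delta b);
  ha_S_lin : lin S;
  ha_S_invol : forall a, S (S a) = a;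
  ha_S_R : forall r, r \in R -> S r = r;
  ha_S_mul : forall a b, S (mul a b) = mul (S b) (S a);
  (* (v) mu_A o (S (x) id) o Delta = eps o S *)
  ha_antipode : forall m : T -> A, lin m ->
      (forall x y, m (tens x y) = mul (S x) y) ->
      forall a, m (Delta a) = eps (S a)
}.

Definition primitive (T : lmodType k) (tens : A -> A -> T) (Delta : A -> T)
    (X : A) : Prop :=
  exists2 eta, eta \in R &
    [/\ mul eta X = X, mul X eta = X & Delta X = tens eta X + tens X eta].

End Defs.

(* Main.v *)
Require Import Defs.
From mathcomp Require Import all_boot all_algebra.
Set Implicit Arguments. Unset Strict Implicit.
Import GRing.Theory.
Local Open Scope ring_scope.

Lemma lin_add (k : fieldType) (U V : lmodType k) (f : U -> V) :
  lin f -> forall u v, f (u + v) = f u + f v.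
Proof. by move=> H u v; have := H 1 u v; rewrite !scale1r. Qed.

Lemma lin_0 (k : fieldType) (U V : lmodType k) (f : U -> V) :
  lin f -> f 0 = 0.
Proof.
move=> H; have := lin_add H 0 0; rewrite addr0 => E.
by apply: (addrI (f 0)); rewrite addr0 -E.
Qed.

Lemma lin_N (k : fieldType) (U V : lmodType k) (f : U -> V) :
  lin f -> forall u, f (- u) = - f u.
Proof.
move=> H u; have := H (-1) u 0; rewrite addr0 (lin_0 H) addr0 !scaleN1r.
by [].
Qed.

Theorem mainTheorem2 (k : fieldType) (A : lmodType k) (mul : A -> A -> A)
    (R : {pred A}) (T : lmodType k) (tens : A -> A -> T)
    (T3 : lmodType k) (tens3 : A -> A -> A -> T3)
    (Delta : A -> T) (eps : A -> A) (S : A -> A)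
    (HA : hopf_algebroid mul R tens tens3 Delta eps S) :
  ((forall y, primitive mul R tens Delta y <->
               exists2 x, primitive mul R tens Delta x & y = S x)
   <-> (forall x, primitive mul R tens Delta x -> primitive mul R tens Delta (S x)))
  /\
  ((forall x, primitive mul R tens Delta x -> primitive mul R tens Delta (S x))
   <-> (forall x, primitive mul R tens Delta x -> S x = - x)).
Proof.
case: HA => mulbil massoc _ _ _ Rcomm _ tens2 _ Dlin elin eR _ eRlin _ cl _
  eonR _ _ _ _ Slin Sinv SR Smul anti.
case: tens2 => tbil tbal tuniv _.
case: mulbil => mul1 mul2; case: tbil => tb1 tb2.
have epsP : forall Y, primitive mul R tens Delta Y -> eps Y = 0.
  move=> Y [e eR' [e1 e2 eD]].
  have [g [glin gE]] : exists g : T -> A, lin g /\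
      forall a b, g (tens a b) = mul (eps a) b.
    apply: (tuniv A (fun a b => mul (eps a) b)).
      split=> [a|b]; first exact: mul1.
      by move=> c u v /=; rewrite elin; apply: mul2.
    move=> r a b rR /=; rewrite eRlin // (@Rcomm r (eps a) rR (eR a)).
    by rewrite massoc.
  have := cl g glin gE Y; rewrite eD lin_add // !gE eonR // e1 => H.
  have H0 : mul (eps Y) e = 0.
    by apply: (addrI Y); rewrite H addr0.
  rewrite -e1 eRlin // Rcomm //; exact: eR.
split.
  split.
    move=> H x Px; apply/H; by exists x.
  move=> H y; split.
    by move=> Py; exists (S y); [exact: H | rewrite Sinv].
  by move=> [x Px ->]; exact: H.
split.
  move=> H X PX; have PSX := H X PX.
  case: PX => e eR' [e1 e2 eD].
  have [m [mlin mE]] : exists m : T -> A, lin m /\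
      forall a b, m (tens a b) = mul (S a) b.
    apply: (tuniv A (fun a b => mul (S a) b)).
      split=> [a|b]; first exact: mul1.
      by move=> c u v /=; rewrite Slin; apply: mul2.
    move=> r a b rR /=; by rewrite Smul (SR r rR) massoc.
  have := anti m mlin mE X; rewrite epsP // eD lin_add // !mE SR // e1.
  have -> : mul (S X) e = S X by rewrite -{2}e1 Smul (SR e eR').
  move=> HH; by apply/eqP; rewrite -addr_eq0 addrC HH eqxx.
move=> H X PX; rewrite (H X PX).
case: PX => e eR' [e1 e2 eD]; exists e => //; split.
- by rewrite (lin_N (mul1 e)) e1.
- by rewrite (lin_N (mul2 e)) e2.
- rewrite (lin_N Dlin) eD opprD (lin_N (tb1 e)) (lin_N (tb2 e)); reflexivity.
Qed.
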